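(* Let $\Gamma$ be a gain operator on $\ell^\infty_+(\mathcal I)$ satisfying Assumption A, and suppose that for some $\rho\in\mathcal K_\infty$: (i) the set $\Psi(\Gamma_\rho)$ is cofinal; (ii) $\Gamma_\rho$ satisfies the uniform NJI condition; (iii) there is $M>0$ with $|\mathcal I_i|\le M$ for all $i\in\mathcal I$. Then there exists $\rho'\in\mathcal K_\infty$ such that $\Sigma(\hat\Gamma_{\rho'})$ is UGS and $\Sigma(\Gamma_{\rho'})$ is UGAS, where $\hat\Gamma_{\rho'}(s):=s\oplus\Gamma_{\rho'}(s)$.
   Context: Let $\mathcal I$ be a nonempty countable index set; $\ell^\infty_+(\mathcal I)$ is the cone of nonnegative real families $s=(s_i)_{i\in\mathcal I}$ with $\|s\|:=\sup_i|s_i|<\infty$, ordered componentwise; $\oplus$ is the componentwise maximum. $\mathcal K$: continuous strictly increasing $\gamma:\mathbb R_+\to\mathbb R_+$ with $\gamma(0)=0$; $\mathcal K_\infty$: unbounded elements of $\mathcal K$, acting on $\ell^\infty_+(\mathcal I)$ componentwise; $\mathcal L$: continuous strictly decreasing functions $\mathbb R_+\to\mathbb R_+$ tending to $0$; $\mathcal{KL}$: continuous $\beta$ with $\beta(\cdot,t)\in\mathcal K$ and $\beta(r,\cdot)\in\mathcal L$ for $r>0$. For $\mathcal J\subset\mathcal I$, $s_{|\mathcal J}$ agrees with $s$ on $\mathcal J$ and is $0$ elsewhere. Gain operator: for each $i$ a finite (possibly empty) $\mathcal I_i\subset\mathcal I\setminus\{i\}$; directed graph $\mathcal G$ with vertices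 $\mathcal I$ and edges $ji$, $j\in\mathcal I_i$; a pointwise equicontinuous family $\gamma_{ij}\in\mathcal K_\infty$ ($ji\in E(\mathcal G)$); functions $\mu_i:\ell^\infty_+(\mathcal I)\to[0,\infty]$ with (M1) some $\xi\in\mathcal K_\infty$ has $\mu_i(0)=0$, $\mu_i(s)\ge\xi(\|s\|)$; (M2) $\mu_i$ monotone; (M3) for each finite $\mathcal J$, $\mu_i$ restricted to vectors vanishing off $\mathcal J$ is finite-valued and continuous; (M4) for each norm-bounded $A$ and $\varepsilon>0$ there is $\delta>0$ with $\sup_i|\mu_i(s_{|\mathcal I_i})-\mu_i(s^0_{|\mathcal I_i})|\le\varepsilon$ whenever $s^0\in A$, $\|s-s^0\|\le\delta$. $\Gamma_i(s):=\mu_i([\gamma_{ij}(s_j)]_{j\in\mathcal I_i})$ (argument zero outside $\mathcal I_i$). $\Gamma_\rho:=(\mathrm{id}+\rho)\circ\Gamma$. Assumption A: there is $\eta\in\mathcal K_\infty$ with $\gamma_{ij}\ge\eta$ for all $ji\in E(\mathcal G)$, and $\mathcal I_i\ne\emptyset$ for all $i$. $\mathcal N^-_i(n)$: vertices $j$ with a directed path from $j$ to $i$ of length at most $n$ ($\mathcal N^-_i(0)=\{i\}$). For monotone $T$ with $T(0)=0$: $\Psi(T):=\{s:T(s)\le s\}$; $\Sigma(T)$ is the system $s^{n+1}=T(s^n)$; UGS: $\|T^n(s)\|\le\varphi(\|s\|)$ for some $\varphi\in\mathcal K_\infty$ and all $s,n$; UGAS: $\|T^n(s)\|\le\beta(\|s\|,n)$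 for some $\beta\in\mathcal{KL}$. A set $A$ is cofinal if every $s$ has $\hat s\in A$ with $s\le\hat s$. $T$ satisfies the uniform NJI condition if for all $r,\varepsilon>0$ there are $n\in\mathbb N$, $\delta>0$ such that for all $s$, $i$ with $s_i\ge\varepsilon$, $\|s\|\le r$ there is $j\in\mathcal N^-_i(n)$ with $s_j\ge\delta$ and $T_j(s)<s_j$. *)

(* Defs.v *)
From Stdlib Require Import Reals List ClassicalEpsilon.
From Coquelicot Require Import Coquelicot.
Open Scope R_scope.

Section Defs.
Variable I : Type.

Definition vec := I -> R.

Definition lp (s : vec) : Prop :=
  (forall i, 0 <= s i) /\ exists B, forall i, Rabs (s i) <= B.

(* sup-norm, valued in extended reals (finite exactly on bounded vectors) *)
Definition nrm (s : vec) : Rbar := Lub_Rbar (fun x => exists i, x = Rabs (s i)).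

Definition vle (s t : vec) : Prop := forall i, s i <= t i.

Definition vzero : vec := fun _ => 0.

Definition restr (P : I -> Prop) (s : vec) : vec :=
  fun j => if excluded_middle_informative (P j) then s j else 0.

Definition vmax (s t : vec) : vec := fun i => Rmax (s i) (t i).
End Defs.

Arguments lp {I}. Arguments nrm {I}. Arguments vle {I}. Arguments vzero {I}.
Arguments restr {I}. Arguments vmax {I}.

Definition cont_Rp (g : R -> R) : Prop :=
  forall x, 0 <= x -> forall eps, 0 < eps -> exists del, 0 < del /\
    forall y, 0 <= y -> Rabs (y - x) < del -> Rabs (g y - g x) < eps.

Definition classK (g : R -> R) : Prop :=
  cont_Rp g /\ g 0 = 0 /\ (forall x, 0 <= x -> 0 <= g x) /\
  (forall x y, 0 <= x -> x < y -> g x < g y).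

Definition classKinf (g : R -> R) : Prop :=
  classK g /\ forall M, exists x, 0 <= x /\ M < g x.

Definition classL (f : R -> R) : Prop :=
  cont_Rp f /\ (forall x, 0 <= x -> 0 <= f x) /\
  (forall x y, 0 <= x -> x < y -> f y < f x) /\
  (forall eps, 0 < eps -> exists T, forall t, T <= t -> f t < eps).

Definition classKL (b : R -> R -> R) : Prop :=
  (forall r t, 0 <= r -> 0 <= t -> forall eps, 0 < eps -> exists del, 0 < del /\
     forall r' t', 0 <= r' -> 0 <= t' -> Rabs (r' - r) < del -> Rabs (t' - t) < del ->
       Rabs (b r' t' - b r t) < eps) /\
  (forall t, 0 <= t -> classK (fun r => b r t)) /\
  (forall r, 0 < r -> classL (fun t => b r t)).

(* Gain operator data: neighbour lists Ii (finite, duplicate-free, i not in Ii i),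
   gains gam i j = gamma_ij, aggregation functions mu i : vec -> [0,oo] *)
Definition is_gain_data {I : Type} (Ii : I -> list I) (gam : I -> I -> R -> R)
    (mu : I -> vec I -> Rbar) : Prop :=
  (forall i, NoDup (Ii i) /\ ~ In i (Ii i)) /\
  (forall i j, In j (Ii i) -> classKinf (gam i j)) /\
  (forall r, 0 <= r -> forall eps, 0 < eps -> exists del, 0 < del /\
     forall i j, In j (Ii i) -> forall r', 0 <= r' -> Rabs (r' - r) < del ->
       Rabs (gam i j r' - gam i j r) < eps) /\
  (forall i s, lp s -> Rbar_le (Finite 0) (mu i s)) /\
  (exists xi, classKinf xi /\ forall i, mu i vzero = Finite 0 /\
     forall s, lp s -> Rbar_le (Finite (xi (real (nrm s)))) (mu i s)) /\
  (forall i s t, lp s -> lp t -> vle s t -> Rbar_le (mu i s) (mu i t)) /\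
  (forall i (J : list I),
     (forall s, lp s -> (forall j, ~ In j J -> s j = 0) -> is_finite (mu i s)) /\
     (forall s, lp s -> (forall j, ~ In j J -> s j = 0) ->
        forall eps, 0 < eps -> exists del, 0 < del /\
        forall t, lp t -> (forall j, ~ In j J -> t j = 0) ->
          Rbar_le (nrm (fun j => t j - s j)) (Finite del) ->
          Rabs (real (mu i t) - real (mu i s)) < eps)) /\
  (forall A : vec I -> Prop, (exists r, forall s, A s -> lp s /\ Rbar_le (nrm s) (Finite r)) ->
     forall eps, 0 < eps -> exists del, 0 < del /\
     forall s0 s, A s0 -> lp s -> Rbar_le (nrm (fun j => s j - s0 j)) (Finite del) ->
       forall i, Rabs (real (mu i (restr (fun j => In j (Ii i)) s))
                       - real (mu i (restr (fun j => In j (Ii i)) s0))) <= eps).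

Definition Gam {I : Type} (Ii : I -> list I) (gam : I -> I -> R -> R)
    (mu : I -> vec I -> Rbar) (s : vec I) : vec I :=
  fun i => real (mu i (restr (fun j => In j (Ii i)) (fun j => gam i j (s j)))).

Definition Gam_rho {I : Type} (Ii : I -> list I) (gam : I -> I -> R -> R)
    (mu : I -> vec I -> Rbar) (rho : R -> R) (s : vec I) : vec I :=
  fun i => Gam Ii gam mu s i + rho (Gam Ii gam mu s i).

Definition Gam_hat {I : Type} (Ii : I -> list I) (gam : I -> I -> R -> R)
    (mu : I -> vec I -> Rbar) (rho : R -> R) (s : vec I) : vec I :=
  vmax s (Gam_rho Ii gam mu rho s).

Definition assumptionA {I : Type} (Ii : I -> list I) (gam : I -> I -> R -> R) : Prop :=
  (exists eta, classKinf eta /\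
     forall i j, In j (Ii i) -> forall r, 0 <= r -> eta r <= gam i j r) /\
  (forall i, Ii i <> nil).

(* directed path j -> ... -> i of length exactly n in the graph with edges ji, j in I_i *)
Inductive dpath {I : Type} (Ii : I -> list I) : nat -> I -> I -> Prop :=
  | dpath0 : forall i, dpath Ii 0 i i
  | dpathS : forall n j k i, In j (Ii k) -> dpath Ii n k i -> dpath Ii (S n) j i.

Definition Nminus {I : Type} (Ii : I -> list I) (i : I) (n : nat) (j : I) : Prop :=
  exists m, (m <= n)%nat /\ dpath Ii m j i.

Definition Psi {I : Type} (T : vec I -> vec I) (s : vec I) : Prop :=
  lp s /\ vle (T s) s.

Definition cofinal {I : Type} (A : vec I -> Prop) : Prop :=
  forall s, lp s -> exists sh, A sh /\ vle s sh.

Definition uniform_NJI {I : Type} (Ii : I -> list I) (T : vec I -> vec I) : Prop :=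
  forall r eps, 0 < r -> 0 < eps -> exists (n : nat) (del : R), 0 < del /\
    forall s i, lp s -> eps <= s i -> Rbar_le (nrm s) (Finite r) ->
      exists j, Nminus Ii i n j /\ del <= s j /\ T s j < s j.

Fixpoint iter {X : Type} (n : nat) (f : X -> X) (x : X) : X :=
  match n with O => x | S n => f (iter n f x) end.

Definition UGS {I : Type} (T : vec I -> vec I) : Prop :=
  exists phi, classKinf phi /\ forall s n, lp s ->
    Rbar_le (nrm (iter n T s)) (Finite (phi (real (nrm s)))).

Definition UGAS {I : Type} (T : vec I -> vec I) : Prop :=
  exists beta, classKL beta /\ forall s n, lp s ->
    Rbar_le (nrm (iter n T s)) (Finite (beta (real (nrm s)) (INR n))).

(* Main.v *)
Require Import Defs.
From Stdlib Require Import Reals List.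
From Coquelicot Require Import Coquelicot.
From Stdlib Require Import Lra Lia Classical ClassicalEpsilon ZArith FunctionalExtensionality.
Open Scope R_scope.

Lemma le_eps (a b : R) : (forall e, 0 < e -> a < b + e) -> a <= b.
Proof. intros H. destruct (Rle_dec a b) as [h|h]; auto.
  assert (0 < (a - b)/2) by lra. specialize (H _ H0). lra. Qed.

Definition fl (x : R) : Z := Int_part x.
Lemma fl_spec x : IZR (fl x) <= x < IZR (fl x) + 1.
Proof. unfold fl. destruct (base_Int_part x). lra. Qed.
Lemma fl_unique m x : IZR m <= x < IZR m + 1 -> fl x = m.
Proof. intros [h1 h2]. unfold fl, Int_part.
  assert (E : (m + 1)%Z = up x). { apply tech_up; rewrite plus_IZR; simpl; lra. }
  rewrite <- E. ring. Qed.
Lemma fl_mono x y : x <= y -> (fl x <= fl y)%Z.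
Proof. intros h. destruct (fl_spec x), (fl_spec y).
  assert (IZR (fl x) < IZR (fl y) + 1) by lra.
  assert (IZR (fl x) < IZR (fl y + 1)) by (rewrite plus_IZR; simpl; lra).
  apply lt_IZR in H4. lia. Qed.

Section Maj.
Variable Q : R -> R -> Prop.
Hypothesis Hup : forall x b b', Q x b -> b <= b' -> Q x b'.
Hypothesis Hpos : forall x b, Q x b -> 0 <= b.
Hypothesis HQ1 : forall x, exists B, forall y, y <= x -> Q y B.
Hypothesis HQ2 : forall eps, 0 < eps -> exists X, forall y, y <= X -> Q y eps.

Definition Vk (k : Z) := fun b => forall y, y <= IZR k + 1 -> Q y b.
Definition gl (k : Z) := real (Glb_Rbar (Vk k)).

Lemma gl_prop k : 0 <= gl k /\ (forall b, Vk k b -> gl k <= b) /\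
   (forall e, 0 < e -> exists b, Vk k b /\ b < gl k + e).
Proof.
  destruct (Glb_Rbar_correct (Vk k)) as [Hlb Hglb].
  destruct (HQ1 (IZR k + 1)) as [B HB].
  assert (VB : Vk k B) by (intros y hy; apply HB; lra).
  assert (L0 : Rbar_le (Finite 0) (Glb_Rbar (Vk k))).
  { apply Hglb. intros b hb. simpl. apply (Hpos (IZR k + 1)). apply hb. lra. }
  pose proof (Hlb B VB) as LB.
  unfold gl. destruct (Glb_Rbar (Vk k)) as [g| |]; simpl in *; try contradiction.
  split; [lra|]. split.
  - intros b hb. apply (Hlb b hb).
  - intros e he. apply NNPP. intros Hn.
    assert (Rbar_le (Finite (g + e)) (Finite g)).
    { apply Hglb. intros b hb. simpl. destruct (Rle_dec (g+e) b); auto.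
      exfalso; apply Hn; exists b; split; auto; lra. }
    simpl in H. lra.
Qed.

Lemma gl_mono k k' : (k <= k')%Z -> gl k <= gl k'.
Proof.
  intros h. apply le_eps. intros e he.
  destruct (gl_prop k') as [_ [_ H]]. destruct (H e he) as [b [hb hb2]].
  destruct (gl_prop k) as [_ [H' _]].
  assert (Vk k b). { intros y hy. apply hb. apply IZR_le in h. lra. }
  specialize (H' b H0). lra.
Qed.

Definition cc (k : Z) := gl k + exp (IZR k).

Lemma cc_mono k k' : (k <= k')%Z -> cc k <= cc k'.
Proof. intros h. unfold cc. pose proof (gl_mono _ _ h). apply IZR_le in h.
  destruct (Req_dec (IZR k) (IZR k')) as [e|e]. rewrite e; lra.
  pose proof (exp_increasing (IZR k) (IZR k')). assert (IZR k < IZR k') by lra. specialize (H0 H1). lra. Qed.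
Lemma cc_strict k k' : (k < k')%Z -> cc k < cc k'.
Proof. intros h. unfold cc. assert (h' : (k <= k')%Z) by lia. pose proof (gl_mono _ _ h'). apply IZR_lt in h.
  pose proof (exp_increasing (IZR k) (IZR k') h). lra. Qed.
Lemma cc_pos k : 0 < cc k.
Proof. unfold cc. destruct (gl_prop k). pose proof (exp_pos (IZR k)). lra. Qed.

Definition GG (x : R) := cc (fl x) + (x - IZR (fl x)) * (cc (fl x + 1) - cc (fl x)).

Lemma GG_eq m u : 0 <= u <= 1 -> GG (IZR m + u) = cc m + u * (cc (m+1) - cc m).
Proof.
  intros hu. unfold GG. destruct (Req_dec u 1) as [e|e].
  - subst u. rewrite (fl_unique (m+1)). 2:{ rewrite plus_IZR; simpl; lra. }
    rewrite plus_IZR; simpl. ring.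
  - rewrite (fl_unique m). 2: lra. ring.
Qed.

Lemma GG_bounds x : cc (fl x) <= GG x < cc (fl x + 1).
Proof. unfold GG. destruct (fl_spec x). pose proof (cc_strict (fl x) (fl x + 1) ltac:(lia)).
  split; nra. Qed.

Lemma GG_strict x y : x < y -> GG x < GG y.
Proof.
  intros h. destruct (Z.eq_dec (fl x) (fl y)) as [e|e].
  - unfold GG. rewrite e. pose proof (cc_strict (fl y) (fl y + 1) ltac:(lia)). nra.
  - pose proof (fl_mono x y ltac:(lra)). pose proof (GG_bounds x). pose proof (GG_bounds y).
    pose proof (cc_mono (fl x + 1) (fl y) ltac:(lia)). lra.
Qed.

Lemma GG_lip z y : z <= y <= z + 1 -> 0 <= GG y - GG z <= (y - z) * (cc (fl z + 2) - cc (fl z)).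
Proof.
  intros [h1 h2]. destruct (fl_spec z) as [a1 a2]. destruct (fl_spec y) as [b1 b2].
  pose proof (fl_mono z y h1).
  assert (fl y = fl z \/ fl y = fl z + 1)%Z.
  { assert (IZR (fl y) < IZR (fl z) + 2) by lra.
    assert (IZR (fl y) < IZR (fl z + 2)) by (rewrite plus_IZR; simpl; lra).
    apply lt_IZR in H1. lia. }
  set (m := fl z) in *.
  pose proof (cc_strict m (m+1) ltac:(lia)). pose proof (cc_strict (m+1) (m+2) ltac:(lia)).
  destruct H0 as [e|e].
  - unfold GG. rewrite e. fold m. nra.
  - unfold GG. rewrite e. fold m. rewrite e in b1, b2. rewrite plus_IZR in b1, b2. simpl in b1, b2.
    replace (m + 1 + 1)%Z with (m + 2)%Z by ring. rewrite plus_IZR. simpl.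
    split; [nra|].
    assert (0 <= (y - (IZR m + 1)) * (cc (m+2) - cc (m+1)) <= (y - z) * (cc (m+2) - cc (m+1))) by (split; nra).
    assert (0 <= (IZR m + 1 - z) * (cc (m+1) - cc m) <= (y - z) * (cc (m+1) - cc m)) by (split; nra).
    nra.
Qed.

Lemma GG_cont x : continuity_pt GG x.
Proof.
  unfold continuity_pt, continue_in, limit1_in, limit_in. intros eps he.
  set (L := cc (fl x + 2) - cc (fl x - 1)).
  assert (HL : 0 < L) by (apply Rlt_0_minus, cc_strict; lia).
  exists (Rmin 1 (eps / (L + 1))). split.
  { apply Rmin_pos; [lra| apply Rdiv_lt_0_compat; lra]. }
  intros y [_ hy]. simpl in *. unfold R_dist in *.
  assert (hm1 : Rmin 1 (eps / (L+1)) <= 1) by apply Rmin_l.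
  assert (hm2 : Rmin 1 (eps / (L+1)) <= eps / (L+1)) by apply Rmin_r.
  assert (hd : Rabs (y - x) * (L + 1) < eps).
  { assert (Rabs (y - x) < eps / (L+1)) by lra.
    apply (Rmult_lt_compat_r (L+1)) in H; [|lra]. field_simplify in H; lra. }
  destruct (Rle_dec x y) as [h|h].
  - rewrite Rabs_right in hy, hd by lra.
    destruct (GG_lip x y ltac:(lra)).
    assert (cc (fl x + 2) - cc (fl x) <= L) by (unfold L; pose proof (cc_mono (fl x - 1) (fl x) ltac:(lia)); lra).
    rewrite Rabs_right by lra. nra.
  - rewrite Rabs_left in hy, hd by lra.
    destruct (GG_lip y x ltac:(lra)).
    pose proof (fl_mono y x ltac:(lra)).
    assert (fl x - 1 <= fl y)%Z.
    { destruct (fl_spec x), (fl_spec y).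
      assert (IZR (fl x - 1) < IZR (fl y) + 1) by (rewrite minus_IZR; simpl; lra).
      assert (HH : IZR (fl x - 1) < IZR (fl y + 1)) by (rewrite plus_IZR; simpl; lra).
      apply lt_IZR in HH. lia. }
    assert (cc (fl y + 2) - cc (fl y) <= L).
    { unfold L. pose proof (cc_mono (fl x - 1) (fl y) ltac:(lia)). pose proof (cc_mono (fl y + 2) (fl x + 2) ltac:(lia)). lra. }
    rewrite Rabs_left1 by lra. nra.
Qed.

Lemma GG_small eps : 0 < eps -> exists X, forall y, y <= X -> GG y <= eps.
Proof.
  intros he. destruct (HQ2 (eps/2) ltac:(lra)) as [X2 HX2].
  exists (Rmin (X2 - 2) (ln (eps/2) - 1)). intros y hy.
  assert (hy1 : y <= X2 - 2) by (pose proof (Rmin_l (X2 - 2) (ln (eps/2) - 1)); lra).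
  assert (hy2 : y <= ln (eps/2) - 1) by (pose proof (Rmin_r (X2 - 2) (ln (eps/2) - 1)); lra).
  destruct (GG_bounds y). destruct (fl_spec y).
  unfold cc in H0.
  destruct (gl_prop (fl y + 1)) as [_ [Hb _]].
  assert (gl (fl y + 1) <= eps/2). { apply Hb. intros z hz. apply HX2. rewrite plus_IZR in hz; simpl in hz. lra. }
  assert (exp (IZR (fl y + 1)) <= eps/2).
  { rewrite <- (exp_ln (eps/2)) by lra. rewrite plus_IZR; simpl.
    destruct (Req_dec (IZR (fl y) + 1) (ln (eps/2))) as [e|e]. rewrite e; lra.
    left. apply exp_increasing. lra. }
  lra.
Qed.

Lemma GG_Q x : Q x (GG x).
Proof.
  destruct (gl_prop (fl x)) as [_ [_ H]].
  destruct (H (exp (IZR (fl x))) (exp_pos _)) as [b [hb hb2]].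
  apply (Hup x b). apply hb. destruct (fl_spec x); lra.
  destruct (GG_bounds x). unfold cc in H0. lra.
Qed.

Lemma GG_pos x : 0 < GG x.
Proof. destruct (GG_bounds x). pose proof (cc_pos (fl x)). lra. Qed.

End Maj.

Lemma MAJ (Q : R -> R -> Prop)
  (Hup : forall x b b', Q x b -> b <= b' -> Q x b')
  (Hpos : forall x b, Q x b -> 0 <= b)
  (HQ1 : forall x, exists B, forall y, y <= x -> Q y B)
  (HQ2 : forall eps, 0 < eps -> exists X, forall y, y <= X -> Q y eps) :
  exists G : R -> R, (forall x, continuity_pt G x) /\ (forall x y, x < y -> G x < G y) /\
    (forall x, 0 < G x) /\ (forall eps, 0 < eps -> exists X, forall y, y <= X -> G y <= eps) /\
    (forall x, Q x (G x)).
Proof.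
  exists (GG Q). split; [|split; [|split; [|split]]].
  - intros; apply GG_cont; auto.
  - intros; apply GG_strict; auto.
  - intros; apply GG_pos; auto.
  - intros; apply GG_small; auto.
  - intros; apply GG_Q; auto.
Qed.

Lemma nat_above x : exists N : nat, x < INR N.
Proof.
  destruct (archimed (Rabs x)) as [a b].
  assert (0 <= Rabs x) by apply Rabs_pos.
  exists (Z.to_nat (up (Rabs x))). rewrite INR_IZR_INZ, Z2Nat.id.
  - pose proof (Rle_abs x). lra.
  - apply le_IZR. lra.
Qed.

Lemma exp_le a b : a <= b -> exp a <= exp b.
Proof. intros h. destruct (Req_dec a b) as [e|e]. subst; lra. left; apply exp_increasing; lra. Qed.

Lemma K_mono g : classK g -> forall x y, 0 <= x -> x <= y -> g x <= g y.
Proof. intros [_ [_ [_ H]]] x y hx hxy. destruct (Req_dec x y) as [e|e]. subst; lra. left; apply H; lra. Qed.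
Lemma K_nonneg g : classK g -> forall x, 0 <= x -> 0 <= g x.
Proof. intros [_ [_ [H _]]]; auto. Qed.
Lemma K_pos g : classK g -> forall x, 0 < x -> 0 < g x.
Proof. intros [_ [H0 [_ H]]] x hx. rewrite <- H0. apply H; lra. Qed.

Lemma cpt_ed f x : continuity_pt f x -> forall eps, 0 < eps -> exists del, 0 < del /\
  forall y, Rabs (y - x) < del -> Rabs (f y - f x) < eps.
Proof.
  intros H eps he. destruct (H eps he) as [del [hd Hd]]. exists del. split; auto.
  intros y hy. destruct (Req_dec y x) as [e|e]. subst. rewrite Rminus_diag, Rabs_R0; auto.
  apply (Hd y). split. split. exact I. intro; apply e; auto. exact hy.
Qed.

Lemma cpt_cont f : (forall x, 0 <= x -> continuity_pt f x) -> cont_Rp f.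
Proof.
  intros H x hx eps he. destruct (cpt_ed f x (H x hx) eps he) as [d [hd Hd]].
  exists d; split; auto.
Qed.

Lemma cpt_ln x : 0 < x -> continuity_pt ln x.
Proof. intros h. apply derivable_continuous_pt. exists (/x). apply derivable_pt_lim_ln; auto. Qed.

Lemma cpt_exp x : continuity_pt exp x.
Proof. apply derivable_continuous_pt, derivable_pt_exp. Qed.

Section Nrm.
Variable I : Type.
Variable i0 : I.

Lemma nrm_le_of (s : vec I) b : (forall i, Rabs (s i) <= b) -> Rbar_le (nrm s) (Finite b).
Proof. intros H. destruct (Lub_Rbar_correct (fun x => exists i, x = Rabs (s i))) as [_ Hl].
  apply Hl. intros x [i ->]. simpl. auto. Qed.

Lemma nrm_ge (s : vec I) i : Rbar_le (Finite (Rabs (s i))) (nrm s).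
Proof. destruct (Lub_Rbar_correct (fun x => exists i, x = Rabs (s i))) as [Hu _].
  apply Hu. exists i; auto. Qed.

Lemma nrm_fin (s : vec I) : lp s -> is_finite (nrm s) /\ forall i, s i <= real (nrm s).
Proof.
  intros [Hn [B HB]]. pose proof (nrm_le_of s B HB) as h1.
  pose proof (nrm_ge s i0) as h2.
  assert (F : is_finite (nrm s)).
  { destruct (nrm s); simpl in *; try contradiction; reflexivity. }
  split; auto. intros i. pose proof (nrm_ge s i). rewrite <- F in H. simpl in H.
  pose proof (Rle_abs (s i)). lra.
Qed.

Lemma nrm_nonneg (s : vec I) : lp s -> 0 <= real (nrm s).
Proof. intros h. destruct (nrm_fin s h) as [_ H]. pose proof (H i0). destruct h as [h _]. specialize (h i0). lra. Qed.

Lemma nrm_real_le (s : vec I) b : lp s -> (forall i, s i <= b) -> real (nrm s) <= b.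
Proof. intros h H. destruct (nrm_fin s h) as [F _]. destruct h as [hn _].
  assert (Rbar_le (nrm s) (Finite b)). { apply nrm_le_of. intros i. rewrite Rabs_right; [apply H | apply Rle_ge, hn]. }
  rewrite <- F in H0. exact H0. Qed.

End Nrm.

Definition cst {I} (c : R) : vec I := fun _ => c.
Definition nonneg {I} (s : vec I) := forall j, 0 <= s j.

Lemma lp_nonneg {I} (s : vec I) : lp s -> nonneg s.
Proof. intros [h _]; exact h. Qed.

Lemma lp_of_bound {I} (s w : vec I) : nonneg s -> lp w -> vle s w -> lp s.
Proof. intros hs [hw [B HB]] hle. split; auto. exists B. intros i.
  specialize (HB i). specialize (hs i). specialize (hle i). rewrite Rabs_right in * by lra. lra. Qed.

Lemma lp_cst {I} c : 0 <= c -> lp (@cst I c).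
Proof. intros h. split. intros; unfold cst; auto. exists c. intros; unfold cst. rewrite Rabs_right; lra. Qed.

Fixpoint sm {I} (L : list I) (v : vec I) : R :=
  match L with nil => 0 | a :: l => v a + sm l v end.

Lemma sm_mono {I} (L : list I) v v' : vle v' v -> sm L v' <= sm L v.
Proof. intros h. induction L; simpl. lra. specialize (h a). lra. Qed.
Lemma sm_nonneg {I} (L : list I) v : nonneg v -> 0 <= sm L v.
Proof. intros h. induction L; simpl. lra. specialize (h a). lra. Qed.
Lemma sm_le_len {I} (L : list I) v R0 : (forall j, v j <= R0) -> sm L v <= INR (length L) * R0.
Proof. intros h. induction L; cbn [sm length]. simpl; lra. rewrite S_INR. specialize (h a). lra. Qed.
Lemma sm_drop {I} (L : list I) v v' j0 g : vle v' v -> In j0 L -> v' j0 <= v j0 - g -> sm L v' <= sm L v - g.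
Proof. intros h hin hj. induction L; simpl in *. contradiction.
  destruct hin as [e|hin]. subst. pose proof (sm_mono L v v' h). lra.
  specialize (IHL hin). specialize (h a). lra. Qed.

Lemma cpt_mult f g x : continuity_pt f x -> continuity_pt g x -> continuity_pt (fun y => f y * g y) x.
Proof. intros a b. apply (continuity_pt_ext (mult_fct f g)). intros; reflexivity. apply continuity_pt_mult; auto. Qed.
Lemma cpt_plus f g x : continuity_pt f x -> continuity_pt g x -> continuity_pt (fun y => f y + g y) x.
Proof. intros a b. apply (continuity_pt_ext (plus_fct f g)). intros; reflexivity. apply continuity_pt_plus; auto. Qed.
Lemma cpt_comp f g x : continuity_pt f x -> continuity_pt g (f x) -> continuity_pt (fun y => g (f y)) x.
Proof. intros a b. apply (continuity_pt_ext (comp g f)). intros; reflexivity. apply continuity_pt_comp; auto. Qed.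
Lemma cpt_const c x : continuity_pt (fun _ => c) x.
Proof. apply continuity_pt_const. intros a b; reflexivity. Qed.
Lemma cpt_id x : continuity_pt (fun y => y) x.
Proof. apply (continuity_pt_ext id). intros; reflexivity. apply derivable_continuous_pt, derivable_pt_id. Qed.

Definition phiG (G : R -> R) (r : R) := if Rle_dec r 0 then 0 else G (ln r) + r.

Lemma PHI G : (forall x, continuity_pt G x) -> (forall x y, x < y -> G x < G y) -> (forall x, 0 < G x) ->
  (forall eps, 0 < eps -> exists X, forall y, y <= X -> G y <= eps) ->
  classKinf (phiG G) /\ (forall x, continuity_pt (phiG G) x) /\ (forall x, 0 <= phiG G x).
Proof.
  intros Gc Gs Gp Gz.
  assert (Hnn : forall x, 0 <= phiG G x).
  { intros x. unfold phiG. destruct (Rle_dec x 0). lra. pose proof (Gp (ln x)). lra. }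
  assert (Hc : forall x, continuity_pt (phiG G) x).
  { intros x. destruct (Rtotal_order x 0) as [h|[h|h]].
    - apply (continuity_pt_locally_ext (fun _ => 0) _ (-x)). lra.
      intros y hy. unfold Rdist in hy. unfold phiG. destruct (Rle_dec y 0) as [|n]; auto.
      exfalso. apply n. pose proof (Rle_abs (y - x)). lra.
      apply cpt_const.
    - subst x. unfold continuity_pt, continue_in, limit1_in, limit_in. intros eps he. simpl. unfold R_dist.
      destruct (Gz (eps/2) ltac:(lra)) as [X HX].
      exists (Rmin (exp X) (eps/2)). split. apply Rmin_pos. apply exp_pos. lra.
      intros y [_ hy]. assert (h1 : Rmin (exp X) (eps/2) <= exp X) by apply Rmin_l.
      assert (h2 : Rmin (exp X) (eps/2) <= eps/2) by apply Rmin_r.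
      rewrite Rminus_0_r in hy. unfold phiG. destruct (Rle_dec 0 0) as [_|n]; [|lra].
      destruct (Rle_dec y 0). rewrite Rminus_0_r, Rabs_R0; lra.
      rewrite Rabs_right in hy by lra.
      assert (ln y < X). { rewrite <- (ln_exp X). apply ln_increasing; lra. }
      specialize (HX (ln y) (Rlt_le _ _ H)). pose proof (Gp (ln y)).
      rewrite Rminus_0_r, Rabs_right by lra. lra.
    - apply (continuity_pt_locally_ext (fun y => G (ln y) + y) _ x). lra.
      intros y hy. unfold Rdist in hy. unfold phiG. destruct (Rle_dec y 0) as [e|n]; auto.
      exfalso. pose proof (Rle_abs (x - y)). rewrite Rabs_minus_sym in hy. lra.
      apply cpt_plus. apply cpt_comp. apply cpt_ln; auto. apply Gc. apply cpt_id. }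
  split; [|split; auto].
  split; [split; [|split; [|split]]|].
  - apply cpt_cont. intros; auto.
  - unfold phiG. destruct (Rle_dec 0 0); lra.
  - intros; auto.
  - intros x y hx hxy. unfold phiG. destruct (Rle_dec y 0); [lra|].
    destruct (Rle_dec x 0). pose proof (Gp (ln y)); lra.
    pose proof (Gs (ln x) (ln y) (ln_increasing x y ltac:(lra) hxy)). lra.
  - intros M0. exists (Rabs M0 + 1). split. pose proof (Rabs_pos M0); lra.
    unfold phiG. destruct (Rle_dec (Rabs M0 + 1) 0). pose proof (Rabs_pos M0); lra.
    pose proof (Gp (ln (Rabs M0 + 1))). pose proof (Rle_abs M0). lra.
Qed.

Section KLsec.
Variable phi : R -> R.
Hypothesis phic : forall x, continuity_pt phi x.
Hypothesis phinn : forall x, 0 <= phi x.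
Hypothesis phi0 : phi 0 = 0.
Hypothesis phis : forall x y, 0 <= x -> x < y -> phi x < phi y.
Variable th : R -> R.
Hypothesis thc : forall x, continuity_pt th x.
Hypothesis ths : forall x y, x < y -> th y < th x.
Hypothesis thp : forall x, 0 < th x.
Hypothesis thz : forall eps, 0 < eps -> exists T, forall t, T <= t -> th t <= eps.

Definition Wt (r : R) := (phi (r + 1) + 1) * exp (r + 1).
Definition ff (r : R) := sqrt (phi r * Wt r).
Definition gg (t : R) := sqrt (th t).
Definition bet (r t : R) := ff r * gg t.

Lemma Wt_pos r : 0 < Wt r.
Proof. unfold Wt. pose proof (phinn (r+1)). pose proof (exp_pos (r+1)). nra. Qed.
Lemma Wt_mono x y : 0 <= x -> x <= y -> Wt x <= Wt y.
Proof. intros hx h. unfold Wt. pose proof (phinn (x+1)).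
  assert (phi (x+1) <= phi (y+1)). { destruct (Req_dec x y). subst; lra. left; apply phis; lra. }
  pose proof (exp_le (x+1) (y+1) ltac:(lra)). pose proof (exp_pos (x+1)). nra. Qed.

Lemma ff_cont x : continuity_pt ff x.
Proof. unfold ff. apply cpt_comp. apply cpt_mult. apply phic. unfold Wt.
  apply cpt_mult. apply cpt_plus. apply (cpt_comp (fun y => y + 1) phi). apply cpt_plus. apply cpt_id. apply cpt_const. apply phic. apply cpt_const.
  apply (cpt_comp (fun y => y + 1) exp). apply cpt_plus. apply cpt_id. apply cpt_const. apply cpt_exp.
  apply continuity_pt_sqrt. pose proof (phinn x). pose proof (Wt_pos x). nra. Qed.
Lemma gg_cont x : continuity_pt gg x.
Proof. unfold gg. apply cpt_comp. apply thc. apply continuity_pt_sqrt. left; apply thp. Qed.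

Lemma ff_nn r : 0 <= ff r. Proof. apply sqrt_pos. Qed.
Lemma gg_pos t : 0 < gg t. Proof. apply sqrt_lt_R0, thp. Qed.
Lemma ff_strict x y : 0 <= x -> x < y -> ff x < ff y.
Proof. intros hx h. unfold ff. apply sqrt_lt_1_alt. pose proof (phinn x). pose proof (Wt_pos x).
  pose proof (phis x y hx h). pose proof (Wt_mono x y hx (Rlt_le _ _ h)). split; nra. Qed.
Lemma ff_pos r : 0 < r -> 0 < ff r.
Proof. intros h. rewrite <- sqrt_0. unfold ff. apply sqrt_lt_1_alt. split. lra.
  pose proof (phis 0 r (Rle_refl 0) h). rewrite phi0 in H. pose proof (Wt_pos r). nra. Qed.
Lemma ff_0 : ff 0 = 0. Proof. unfold ff. rewrite phi0, Rmult_0_l. apply sqrt_0. Qed.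

Lemma bet_KL : classKL bet.
Proof.
  split; [|split].
  - intros r t hr ht eps he.
    set (A := Rabs (ff r) + 1). set (B := Rabs (gg t) + 1).
    assert (hA : 0 < A) by (unfold A; pose proof (Rabs_pos (ff r)); lra).
    assert (hB : 0 < B) by (unfold B; pose proof (Rabs_pos (gg t)); lra).
    destruct (cpt_ed gg t (gg_cont t) 1 ltac:(lra)) as [d1 [hd1 H1]].
    destruct (cpt_ed ff r (ff_cont r) (eps / (2 * B))) as [d2 [hd2 H2]]. apply Rdiv_lt_0_compat; lra.
    destruct (cpt_ed gg t (gg_cont t) (eps / (2 * A))) as [d3 [hd3 H3]]. apply Rdiv_lt_0_compat; lra.
    exists (Rmin d1 (Rmin d2 d3)). split. repeat apply Rmin_pos; auto.
    intros r' t' _ _ hr' ht'.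
    assert (Rmin d1 (Rmin d2 d3) <= d1) by apply Rmin_l.
    assert (Rmin d1 (Rmin d2 d3) <= d2) by (eapply Rle_trans; [apply Rmin_r| apply Rmin_l]).
    assert (Rmin d1 (Rmin d2 d3) <= d3) by (eapply Rle_trans; [apply Rmin_r| apply Rmin_r]).
    specialize (H1 t' ltac:(lra)). specialize (H2 r' ltac:(lra)). specialize (H3 t' ltac:(lra)).
    unfold bet.
    replace (ff r' * gg t' - ff r * gg t) with ((ff r' - ff r) * gg t' + ff r * (gg t' - gg t)) by ring.
    eapply Rle_lt_trans. apply Rabs_triang. rewrite !Rabs_mult.
    assert (hg' : Rabs (gg t') <= B).
    { unfold B. pose proof (Rabs_triang (gg t' - gg t) (gg t)) as HT4. replace (gg t' - gg t + gg t) with (gg t') in HT4 by ring. lra. }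
    assert (e1 : Rabs (ff r' - ff r) * Rabs (gg t') <= eps / 2).
    { apply Rle_trans with ((eps / (2 * B)) * B). apply Rmult_le_compat; try apply Rabs_pos; lra.
      right. field. lra. }
    assert (e2 : Rabs (ff r) * Rabs (gg t' - gg t) < eps / 2).
    { apply Rle_lt_trans with (Rabs (ff r) * (eps / (2 * A))). apply Rmult_le_compat_l. apply Rabs_pos. lra.
      apply Rlt_le_trans with (A * (eps / (2*A))). apply Rmult_lt_compat_r. apply Rdiv_lt_0_compat; lra. unfold A; lra.
      right. field. lra. }
    lra.
  - intros t ht. split; [|split; [|split]].
    + apply cpt_cont. intros x _. apply cpt_mult. apply ff_cont. apply cpt_const.
    + unfold bet. rewrite ff_0. ring.
    + intros x _. unfold bet. pose proof (ff_nn x). pose proof (gg_pos t). nra.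
    + intros x y hx h. unfold bet. pose proof (ff_strict x y hx h). pose proof (gg_pos t). nra.
  - intros r hr. split; [|split; [|split]].
    + apply cpt_cont. intros x _. apply cpt_mult. apply cpt_const. apply gg_cont.
    + intros x _. unfold bet. pose proof (ff_nn r). pose proof (gg_pos x). nra.
    + intros x y _ h. unfold bet. pose proof (ff_pos r hr).
      assert (gg y < gg x). { unfold gg. apply sqrt_lt_1_alt. split. left; apply thp. apply ths; auto. }
      nra.
    + intros eps he. pose proof (ff_pos r hr) as hf.
      set (e := eps / (2 * ff r)). assert (he' : 0 < e) by (apply Rdiv_lt_0_compat; lra).
      destruct (thz (e * e) ltac:(nra)) as [T HT]. exists T. intros t ht.
      assert (gg t <= e). { unfold gg. rewrite <- (sqrt_square e) by lra. apply sqrt_le_1_alt. apply HT; auto. }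
      unfold bet. assert (ff r * gg t <= ff r * e) by (apply Rmult_le_compat_l; lra).
      assert (ff r * e = eps / 2) by (unfold e; field; lra). lra.
Qed.

Lemma bet_bound x r n W : 0 <= r -> 0 <= x -> x <= phi r -> x <= th n * W -> W <= Wt r -> x <= bet r n.
Proof.
  intros hr hx h1 h2 h3. unfold bet, ff, gg. rewrite <- sqrt_mult.
  2:{ pose proof (phinn r). pose proof (Wt_pos r). nra. } 2:{ left; apply thp. }
  rewrite <- (sqrt_square x) by auto. apply sqrt_le_1_alt.
  pose proof (phinn r). pose proof (thp n). pose proof (Wt_pos r).
  assert (x * x <= phi r * (th n * W)) by (apply Rmult_le_compat; lra).
  assert (th n * W <= th n * Wt r) by (apply Rmult_le_compat_l; lra).
  nra.
Qed.

End KLsec.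

Section Main.
Variable I : Type.
Variable i0 : I.
Variable Ii : I -> list I.
Variable gam : I -> I -> R -> R.
Variable mu : I -> vec I -> Rbar.
Hypothesis Hgain : is_gain_data Ii gam mu.
Hypothesis HA : assumptionA Ii gam.
Variable rho : R -> R.
Hypothesis Hrho : classKinf rho.
Hypothesis Hcof : cofinal (Psi (Gam_rho Ii gam mu rho)).
Hypothesis HNJI : uniform_NJI Ii (Gam_rho Ii gam mu rho).
Variable M : R.
Hypothesis HMpos : 0 < M.
Hypothesis HMb : forall i, INR (length (Ii i)) <= M.

Definition gv i (s : vec I) : vec I := restr (fun j => In j (Ii i)) (fun j => gam i j (s j)).

Lemma gamK i j : In j (Ii i) -> classK (gam i j).
Proof. destruct Hgain as [_ [HK _]]. intros h. apply (HK i j h). Qed.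

Lemma gv_nonneg i s : nonneg s -> nonneg (gv i s).
Proof. intros hs j. unfold gv, restr. destruct (excluded_middle_informative _). apply (K_nonneg _ (gamK i j i1)), hs. lra. Qed.

Lemma gv_van i s j : ~ In j (Ii i) -> gv i s j = 0.
Proof. intros h. unfold gv, restr. destruct (excluded_middle_informative _). contradiction. auto. Qed.

Lemma gv_lp i s : nonneg s -> lp (gv i s).
Proof.
  intros hs. split. apply gv_nonneg; auto.
  exists (sm (Ii i) (fun j => Rabs (gam i j (s j)))). intros j.
  unfold gv, restr. destruct (excluded_middle_informative _) as [h|h].
  - clear hs. induction (Ii i); simpl in *. contradiction.
    destruct h as [e|h]. subst. pose proof (sm_nonneg l (fun j => Rabs (gam i j (s j)))). 
    assert (nonneg (fun j => Rabs (gam i j (s j)))) by (intro; apply Rabs_pos). specialize (H H0). lra.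
    specialize (IHl h). pose proof (Rabs_pos (gam i a (s a))). lra.
  - rewrite Rabs_R0. apply sm_nonneg. intro; apply Rabs_pos.
Qed.

Lemma gv_mono i s t : nonneg s -> vle s t -> vle (gv i s) (gv i t).
Proof. intros hs h j. unfold gv, restr. destruct (excluded_middle_informative _) as [e|e]; [|lra].
  apply (K_mono _ (gamK i j e)). apply hs. apply h. Qed.

Lemma Gam_fin i s : nonneg s -> mu i (gv i s) = Finite (Gam Ii gam mu s i) /\ 0 <= Gam Ii gam mu s i.
Proof.
  intros hs. destruct Hgain as [_ [_ [_ [Hm0 [_ [_ [HM3 _]]]]]]].
  destruct (HM3 i (Ii i)) as [Hf _].
  specialize (Hf (gv i s) (gv_lp i s hs) (fun j hj => gv_van i s j hj)).
  specialize (Hm0 i (gv i s) (gv_lp i s hs)).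
  unfold Gam. fold (gv i s). split. symmetry; exact Hf.
  rewrite <- Hf in Hm0. exact Hm0.
Qed.

Lemma Gam_nonneg s : nonneg s -> nonneg (Gam Ii gam mu s).
Proof. intros hs i. apply (Gam_fin i s hs). Qed.

Lemma Gam_mono s t : nonneg s -> vle s t -> vle (Gam Ii gam mu s) (Gam Ii gam mu t).
Proof.
  intros hs h i. destruct Hgain as [_ [_ [_ [_ [_ [HM2 _]]]]]].
  assert (ht : nonneg t) by (intro j; specialize (hs j); specialize (h j); lra).
  pose proof (HM2 i (gv i s) (gv i t) (gv_lp i s hs) (gv_lp i t ht) (gv_mono i s t hs h)).
  destruct (Gam_fin i s hs) as [e1 _]. destruct (Gam_fin i t ht) as [e2 _].
  rewrite e1, e2 in H. exact H.
Qed.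

Definition xi0 : R -> R := proj1_sig (constructive_indefinite_description _
   (match Hgain with conj _ (conj _ (conj _ (conj _ (conj H _)))) => H end)).
Lemma xi0_spec : classKinf xi0 /\ forall i, mu i vzero = Finite 0 /\
     forall s, lp s -> Rbar_le (Finite (xi0 (real (nrm s)))) (mu i s).
Proof. unfold xi0. destruct (constructive_indefinite_description _ _). simpl. auto. Qed.

Definition eta0 : R -> R := proj1_sig (constructive_indefinite_description _ (proj1 HA)).
Lemma eta0_spec : classKinf eta0 /\ forall i j, In j (Ii i) -> forall r, 0 <= r -> eta0 r <= gam i j r.
Proof. unfold eta0. destruct (constructive_indefinite_description _ _). simpl. auto. Qed.

Definition alpha (x : R) := xi0 (eta0 x).
Lemma alphaK : classK alpha.
Proof.
  destruct xi0_spec as [[Kx _] _]. destruct eta0_spec as [[Ke _] _].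
  pose proof Kx as [cx [zx [nx sx]]]. pose proof Ke as [ce [ze [ne se]]].
  split; [|split; [|split]].
  - intros x hx eps he. destruct (cx (eta0 x) (ne x hx) eps he) as [d1 [hd1 H1]].
    destruct (ce x hx d1 hd1) as [d2 [hd2 H2]]. exists d2. split; auto.
    intros y hy hxy. apply H1. apply ne; auto. apply H2; auto.
  - unfold alpha. rewrite ze, zx. auto.
  - intros x hx. unfold alpha. apply nx, ne, hx.
  - intros x y hx hxy. unfold alpha. apply sx. apply ne, hx. apply se; auto.
Qed.

Lemma Gam_low s i j : nonneg s -> In j (Ii i) -> alpha (s j) <= Gam Ii gam mu s i.
Proof.
  intros hs hj. destruct xi0_spec as [[Kx _] HM1]. destruct eta0_spec as [[Ke _] Hle].
  destruct (HM1 i) as [_ H]. specialize (H (gv i s) (gv_lp i s hs)).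
  destruct (Gam_fin i s hs) as [e _]. rewrite e in H. simpl in H.
  destruct (nrm_fin I i0 (gv i s) (gv_lp i s hs)) as [_ Hn].
  specialize (Hn j). unfold gv, restr in Hn. destruct (excluded_middle_informative _) as [h|h]; [|contradiction].
  unfold alpha. eapply Rle_trans; [|exact H]. apply (K_mono _ Kx). apply (K_nonneg _ Ke), hs.
  eapply Rle_trans; [|exact Hn]. apply Hle; auto.
Qed.


Definition rho2 (x : R) := rho x / 2.
Lemma rho2K : classKinf rho2.
Proof.
  destruct Hrho as [[c [z [n s]]] u]. split; [split; [|split; [|split]]|].
  - intros x hx eps he. destruct (c x hx (2*eps) ltac:(lra)) as [d [hd H]]. exists d; split; auto.
    intros y hy hxy. specialize (H y hy hxy). unfold rho2.
    replace (rho y / 2 - rho x / 2) with ((rho y - rho x) / 2) by field.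
    unfold Rdiv. rewrite Rabs_mult. rewrite (Rabs_right (/2)) by lra. lra.
  - unfold rho2; rewrite z; lra.
  - intros x hx; unfold rho2; specialize (n x hx); lra.
  - intros x y hx hxy; unfold rho2; specialize (s x y hx hxy); lra.
  - intros M0. destruct (u (2*M0)) as [x [hx hM]]. exists x; split; auto. unfold rho2; lra.
Qed.

Lemma rhoK : classK rho. Proof. apply Hrho. Qed.
Lemma rho2K' : classK rho2. Proof. apply rho2K. Qed.

Lemma vle_trans (a b c : vec I) : vle a b -> vle b c -> vle a c.
Proof. intros h1 h2 i. specialize (h1 i); specialize (h2 i); lra. Qed.
Lemma vle_refl (a : vec I) : vle a a.
Proof. intros i; lra. Qed.

Lemma Tr_nonneg r (Kr : classK r) s : nonneg s -> nonneg (Gam_rho Ii gam mu r s).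
Proof. intros hs i. unfold Gam_rho. pose proof (Gam_nonneg s hs i). pose proof (K_nonneg r Kr _ H). lra. Qed.

Lemma Tr_mono r (Kr : classK r) s t : nonneg s -> vle s t -> vle (Gam_rho Ii gam mu r s) (Gam_rho Ii gam mu r t).
Proof. intros hs h i. unfold Gam_rho. pose proof (Gam_nonneg s hs i). pose proof (Gam_mono s t hs h i).
  pose proof (K_mono r Kr _ _ H H0). lra. Qed.

Lemma T'_le_T s : nonneg s -> vle (Gam_rho Ii gam mu rho2 s) (Gam_rho Ii gam mu rho s).
Proof. intros hs i. unfold Gam_rho, rho2. pose proof (Gam_nonneg s hs i). pose proof (K_nonneg rho rhoK _ H). lra. Qed.

Lemma H'_nonneg s : nonneg s -> nonneg (Gam_hat Ii gam mu rho2 s).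
Proof. intros hs i. unfold Gam_hat, vmax. specialize (hs i). pose proof (Rmax_l (s i) (Gam_rho Ii gam mu rho2 s i)). lra. Qed.

Lemma H'_mono s t : nonneg s -> vle s t -> vle (Gam_hat Ii gam mu rho2 s) (Gam_hat Ii gam mu rho2 t).
Proof. intros hs h i. unfold Gam_hat, vmax. pose proof (Tr_mono rho2 rho2K' s t hs h i).
  apply Rmax_lub. eapply Rle_trans; [apply h|apply Rmax_l]. eapply Rle_trans; [apply H|apply Rmax_r]. Qed.

Section It.
Variable F : vec I -> vec I.
Hypothesis HF : forall s, nonneg s -> nonneg (F s).
Hypothesis HFm : forall s t, nonneg s -> vle s t -> vle (F s) (F t).

Lemma iter_nonneg n s : nonneg s -> nonneg (Defs.iter n F s).
Proof. intros hs; induction n; simpl; auto. Qed.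

Lemma iter_mono n s t : nonneg s -> vle s t -> vle (Defs.iter n F s) (Defs.iter n F t).
Proof. intros hs h; induction n; simpl; auto. apply HFm; auto. apply iter_nonneg; auto. Qed.

Lemma iter_dec w : nonneg w -> vle (F w) w -> forall n, vle (Defs.iter (S n) F w) (Defs.iter n F w).
Proof. intros hw h n; induction n. simpl; auto. change (vle (F (Defs.iter (S n) F w)) (F (Defs.iter n F w))).
  apply HFm; auto. apply iter_nonneg; auto. Qed.

Lemma iter_dec_gen w : nonneg w -> vle (F w) w -> forall m n, (m <= n)%nat -> vle (Defs.iter n F w) (Defs.iter m F w).
Proof. intros hw h m n hmn. induction hmn. apply vle_refl. eapply vle_trans; [|exact IHhmn]. apply iter_dec; auto. Qed.

Lemma iter_dom w s : nonneg s -> vle s w -> vle (F w) w -> forall n, vle (Defs.iter n F s) w.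
Proof. intros hs h hw n. assert (nonneg w) by (intro j; specialize (hs j); specialize (h j); lra).
  eapply vle_trans. apply iter_mono; eauto. apply (iter_dec_gen w H hw 0 n). lia. Qed.
End It.

Definition T' := Gam_rho Ii gam mu rho2.
Definition H' := Gam_hat Ii gam mu rho2.
Lemma T'_nonneg s : nonneg s -> nonneg (T' s). Proof. apply Tr_nonneg, rho2K'. Qed.
Lemma T'_mono s t : nonneg s -> vle s t -> vle (T' s) (T' t). Proof. apply Tr_mono, rho2K'. Qed.

Definition Psi' (w : vec I) := lp w /\ vle (T' w) w.

Lemma H'_le w : nonneg w -> vle (T' w) w -> vle (H' w) w.
Proof. intros hw h i. unfold H', Gam_hat, vmax. apply Rmax_lub. lra. apply h. Qed.

Lemma cof' s : lp s -> exists w, Psi' w /\ vle s w.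
Proof. intros hs. destruct (Hcof s hs) as [w [[hw hT] hsw]]. exists w. split; auto. split; auto.
  eapply vle_trans. apply T'_le_T, lp_nonneg, hw. auto. Qed.

Lemma dom_both w s : Psi' w -> nonneg s -> vle s w -> forall n, vle (Defs.iter n T' s) w /\ vle (Defs.iter n H' s) w.
Proof. intros [hw h] hs hsw n. split.
  - apply (iter_dom T' T'_nonneg T'_mono); auto.
  - apply (iter_dom H' H'_nonneg H'_mono); auto. apply H'_le; auto. apply lp_nonneg; auto. Qed.

Fixpoint nb (n : nat) (i : I) : list I :=
  match n with O => i :: nil | S m => nb m i ++ flat_map Ii (nb m i) end.

Lemma nb_path m j i : dpath Ii m j i -> In j (nb m i).
Proof. intros h. induction h. simpl; auto. simpl. apply in_or_app; right. apply in_flat_map. exists k; auto. Qed.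

Lemma nb_incl m n i : (m <= n)%nat -> incl (nb m i) (nb n i).
Proof. intros h. induction h. apply incl_refl. eapply incl_tran; [exact IHh|]. simpl. apply incl_appl, incl_refl. Qed.

Lemma nb_N i n j : Defs.Nminus Ii i n j -> In j (nb n i).
Proof. intros [m [hm hp]]. apply (nb_incl m n i hm). apply nb_path; auto. Qed.

Lemma flat_len l : INR (length (flat_map Ii l)) <= M * INR (length l).
Proof. induction l; cbn [flat_map length]. simpl; lra. rewrite length_app, plus_INR. rewrite S_INR. specialize (HMb a). lra. Qed.

Lemma nb_len n i : INR (length (nb n i)) <= (1 + M) ^ n.
Proof. induction n. simpl; lra. cbn [nb]. change ((1+M)^(S n)) with ((1+M) * (1+M)^n). rewrite length_app, plus_INR. pose proof (flat_len (nb n i)).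
  pose proof (pos_INR (length (nb n i))). nra. Qed.


Lemma A1 R0 eps : 0 < R0 -> 0 < eps -> exists N, forall w, Psi' w -> real (nrm w) <= R0 ->
  forall i, Defs.iter N T' w i < eps.
Proof.
  intros hR he. destruct (HNJI R0 eps hR he) as [n0 [del [hdel HN]]].
  pose proof Hrho as [[crho [zrho [nrho srho]]] _].
  destruct (crho 0 (Rle_refl 0) (del/2) ltac:(lra)) as [d0 [hd0 Hd0]].
  set (c := Rmin (d0/2) (del/4)).
  assert (hc : 0 < c) by (apply Rmin_pos; lra).
  assert (hcd : c <= del/4) by apply Rmin_r.
  assert (hcd0 : c <= d0/2) by apply Rmin_l.
  assert (hrc : rho c < del/2).
  { assert (Rabs (c - 0) < d0) by (rewrite Rminus_0_r, Rabs_right; lra).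
    specialize (Hd0 c (Rlt_le _ _ hc) H). rewrite zrho, Rminus_0_r in Hd0.
    pose proof (Rle_abs (rho c)). lra. }
  assert (hrcp : 0 < rho c) by (apply (K_pos rho rhoK); auto).
  set (gap := Rmin (rho c / 2) (del / 2)).
  assert (hgap : 0 < gap) by (apply Rmin_pos; lra).
  assert (hg1 : gap <= rho c / 2) by apply Rmin_l.
  assert (hg2 : gap <= del / 2) by apply Rmin_r.
  set (K := (1+M)^n0).
  destruct (nat_above (K * R0 / gap)) as [N HN'].
  exists N. intros w [hw hTw] hwR i. apply Rnot_le_lt. intros Hge.
  set (L := nb n0 i).
  assert (hwn : nonneg w) by (apply lp_nonneg; auto).
  assert (Hdec : forall n, (n <= N)%nat -> sm L (Defs.iter n T' w) <= sm L w - INR n * gap).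
  { induction n; intros hn. simpl. lra.
    specialize (IHn ltac:(lia)).
    set (v := Defs.iter n T' w) in *.
    assert (hvn: nonneg v) by (apply iter_nonneg; [apply T'_nonneg|auto]).
    assert (hvw: vle v w) by (apply (iter_dom T' T'_nonneg T'_mono); auto using vle_refl).
    assert (hnN : (n <= N)%nat) by lia.
    assert (hvi : eps <= v i) by (pose proof (iter_dec_gen T' T'_nonneg T'_mono w hwn hTw n N hnN i); unfold v; lra).
    assert (hvl : lp v) by (apply (lp_of_bound v w); auto).
    assert (hvr : Rbar_le (nrm v) (Finite R0)).
    { apply nrm_le_of. intros j. rewrite Rabs_right by (apply Rle_ge, hvn).
      destruct (nrm_fin I i0 w hw) as [_ Hn]. specialize (Hn j). specialize (hvw j). lra. }
    destruct (HN v i hvl hvi hvr) as [j [hjN [hjd hjT]]].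
    assert (hstep : Defs.iter (S n) T' w j <= v j - gap).
    { change (Defs.iter (S n) T' w) with (T' v). unfold T', Gam_rho, rho2. unfold Gam_rho in hjT.
      set (g := Gam Ii gam mu v j) in *. assert (hg0 : 0 <= g) by apply (Gam_nonneg v hvn j).
      destruct (Rle_dec c g) as [h|h].
      - pose proof (K_mono rho rhoK c g (Rlt_le _ _ hc) h). lra.
      - pose proof (K_mono rho rhoK g c hg0 (Rlt_le _ _ (Rnot_le_lt _ _ h))). lra. }
    assert (hle : vle (Defs.iter (S n) T' w) v) by (apply iter_dec; auto using T'_nonneg, T'_mono).
    pose proof (sm_drop L v (Defs.iter (S n) T' w) j gap hle (nb_N i n0 j hjN) hstep).
    rewrite S_INR. lra. }
  specialize (Hdec N (le_n N)).
  pose proof (sm_nonneg L (Defs.iter N T' w) (iter_nonneg T' T'_nonneg N w hwn)).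
  assert (sm L w <= INR (length L) * R0).
  { apply sm_le_len. intros j. destruct (nrm_fin I i0 w hw) as [_ Hn]. specialize (Hn j). lra. }
  pose proof (nb_len n0 i). fold K L in H1.
  assert (K * R0 < INR N * gap).
  { apply (Rmult_lt_compat_r gap) in HN'; auto. unfold Rdiv in HN'. rewrite Rmult_assoc, Rinv_l in HN' by lra. lra. }
  assert (INR (length L) * R0 <= K * R0) by (apply Rmult_le_compat_r; lra).
  lra.
Qed.


Lemma cst_le (s : vec I) r : lp s -> real (nrm s) <= r -> vle s (cst r).
Proof. intros hs h j. destruct (nrm_fin I i0 s hs) as [_ H]. specialize (H j). unfold cst. lra. Qed.

Lemma UGA R0 eps : 0 < R0 -> 0 < eps -> exists N, forall s, lp s -> real (nrm s) <= R0 ->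
  forall n, (N <= n)%nat -> forall i, Defs.iter n T' s i < eps.
Proof.
  intros hR he. destruct (cof' (cst R0) (lp_cst R0 (Rlt_le _ _ hR))) as [w [[hw hTw] hsw]].
  destruct (A1 (Rmax 1 (real (nrm w))) eps ltac:(pose proof (Rmax_l 1 (real (nrm w))); lra) he) as [N HN].
  exists N. intros s hs hsR n hn i.
  assert (hwn : nonneg w) by (apply lp_nonneg; auto).
  pose proof (HN w (conj hw hTw) (Rmax_r _ _) i).
  assert (vle s w) by (eapply vle_trans; [apply cst_le; eauto|auto]).
  pose proof (iter_mono T' T'_nonneg T'_mono n s w (lp_nonneg s hs) H0 i).
  pose proof (iter_dec_gen T' T'_nonneg T'_mono w hwn hTw N n hn i). lra.
Qed.

Lemma alpha_iter_pos n : 0 < Defs.iter n alpha 1.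
Proof. induction n; simpl. lra. apply (K_pos alpha alphaK); auto. Qed.

Lemma low_step s a : nonneg s -> 0 <= a -> vle (cst a) s -> vle (cst (alpha a)) (T' s).
Proof.
  intros hs ha h i. destruct HA as [_ Hne]. specialize (Hne i).
  destruct (Ii i) as [|j l] eqn:E; [contradiction|].
  assert (hj : In j (Ii i)) by (rewrite E; left; auto).
  pose proof (Gam_low s i j hs hj). unfold cst in *. specialize (h j).
  pose proof (K_mono alpha alphaK a (s j) ha h).
  unfold T', Gam_rho. pose proof (Gam_nonneg s hs i). pose proof (K_nonneg rho2 rho2K' _ H1). lra.
Qed.

Lemma low_iter n : vle (cst (Defs.iter n alpha 1)) (Defs.iter n T' (cst 1)).
Proof.
  induction n. simpl. apply vle_refl.
  simpl. apply low_step. apply iter_nonneg. apply T'_nonneg. intros j; unfold cst; lra.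
  left; apply alpha_iter_pos. auto.
Qed.

Lemma Small eps : 0 < eps -> exists c, 0 < c /\ exists w, Psi' w /\ vle (cst c) w /\ forall i, w i <= eps.
Proof.
  intros he. destruct (cof' (cst 1) (lp_cst 1 ltac:(lra))) as [w1 [[hw1 hT1] h1]].
  assert (hwn : nonneg w1) by (apply lp_nonneg; auto).
  destruct (A1 (Rmax 1 (real (nrm w1))) eps ltac:(pose proof (Rmax_l 1 (real (nrm w1))); lra) he) as [N HN].
  exists (Defs.iter N alpha 1). split. apply alpha_iter_pos.
  exists (Defs.iter N T' w1). split; [split|split].
  - apply (lp_of_bound _ w1). apply iter_nonneg; auto using T'_nonneg. auto.
    apply (iter_dom T' T'_nonneg T'_mono); auto using vle_refl.
  - apply (iter_dec T' T'_nonneg T'_mono); auto.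
  - eapply vle_trans. apply low_iter. apply iter_mono; auto using T'_nonneg, T'_mono. intros j; unfold cst; lra.
  - intros i. left. apply (HN w1 (conj hw1 hT1) (Rmax_r _ _) i).
Qed.

Definition H'' := H'.

Lemma UGS_ex : exists phi, classKinf phi /\ (forall x, continuity_pt phi x) /\ (forall x, 0 <= phi x) /\
  forall s, lp s -> forall n i, Defs.iter n H' s i <= phi (real (nrm s)) /\ Defs.iter n T' s i <= phi (real (nrm s)).
Proof.
  set (Q1 := fun x b => 0 <= b /\ forall s, lp s -> real (nrm s) <= exp x ->
     forall n i, Defs.iter n H' s i <= b /\ Defs.iter n T' s i <= b).
  destruct (MAJ Q1) as [G [Gc [Gs [Gp [Gz GQ]]]]].
  - intros x b b' [h0 h] hb. split. lra. intros s hs hx n i. destruct (h s hs hx n i). split; lra.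
  - intros x b [h _]; auto.
  - intros x. destruct (cof' (cst (exp x)) (lp_cst _ (Rlt_le _ _ (exp_pos x)))) as [w [Pw hw]].
    exists (real (nrm w)). intros y hy. split. apply nrm_nonneg; auto. apply Pw.
    intros s hs hsy n i.
    assert (vle s w). { eapply vle_trans; [|exact hw]. apply cst_le; auto. pose proof (exp_le y x hy). lra. }
    destruct (dom_both w s Pw (lp_nonneg s hs) H n) as [a b].
    destruct (nrm_fin I i0 w (proj1 Pw)) as [_ Hn]. specialize (a i). specialize (b i). specialize (Hn i). split; lra.
  - intros eps he. destruct (Small eps he) as [c [hc [w [Pw [hcw hwe]]]]].
    exists (ln c). intros y hy. split. lra. intros s hs hsy n i.
    assert (vle s w). { eapply vle_trans; [|exact hcw]. apply cst_le; auto. pose proof (exp_le y (ln c) hy). rewrite exp_ln in H by auto. lra. }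
    destruct (dom_both w s Pw (lp_nonneg s hs) H n) as [a b].
    specialize (a i). specialize (b i). specialize (hwe i). split; lra.
  - destruct (PHI G Gc Gs Gp Gz) as [Kphi [phic phinn]].
    exists (phiG G). split; auto. split; auto. split; auto.
    intros s hs n i. pose proof (nrm_nonneg I i0 s hs) as hr.
    set (r := real (nrm s)) in *.
    destruct (Rle_dec r 0) as [h|h].
    + assert (phiG G r = 0) by (unfold phiG; destruct (Rle_dec r 0); [auto|contradiction]).
      rewrite H.
      assert (forall e, 0 < e -> Defs.iter n H' s i <= e /\ Defs.iter n T' s i <= e).
      { intros e he. destruct (Gz e he) as [X HX]. destruct (GQ X) as [_ HQ].
        destruct (HQ s hs) with (n := n) (i := i) as [a b]. pose proof (exp_pos X). fold r; lra.
        specialize (HX X (Rle_refl X)). split; lra. }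
      split; apply le_eps; intros e he; destruct (H0 (e/2) ltac:(lra)); lra.
    + assert (phiG G r = G (ln r) + r) by (unfold phiG; destruct (Rle_dec r 0); [contradiction|auto]).
      rewrite H. destruct (GQ (ln r)) as [_ HQ].
      destruct (HQ s hs) with (n := n) (i := i) as [a b]. rewrite exp_ln; fold r; lra.
      split; lra.
Qed.


Lemma nat_between r : 0 <= r -> exists k : nat, r <= INR k <= r + 1.
Proof.
  intros hr. destruct (archimed r) as [a b].
  exists (Z.to_nat (up r)). rewrite INR_IZR_INZ, Z2Nat.id. lra.
  apply le_IZR. lra.
Qed.

Lemma cpt_opp x : continuity_pt (fun y => - y) x.
Proof. apply (continuity_pt_ext (opp_fct id)). intros; reflexivity. apply continuity_pt_opp, derivable_continuous_pt, derivable_pt_id. Qed.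

Theorem main_sec : exists rho', classKinf rho' /\
    UGS (Gam_hat Ii gam mu rho') /\ UGAS (Gam_rho Ii gam mu rho').
Proof.
  exists rho2. split. apply rho2K.
  destruct UGS_ex as [phi [Kphi [phic [phinn Hphi]]]].
  split.
  { exists phi. split; auto. intros s n hs. apply nrm_le_of. intros i.
    rewrite Rabs_right. apply (Hphi s hs n i). apply Rle_ge. apply (iter_nonneg H' H'_nonneg). apply lp_nonneg; auto. }
  pose proof Kphi as [[_ [phi0 [_ phis]]] _].
  set (Wk := fun k : nat => (phi (INR k) + 1) * exp (INR k)).
  assert (Wk1 : forall k, phi (INR k) + 1 <= Wk k).
  { intros k. unfold Wk. pose proof (exp_le 0 (INR k) (pos_INR k)). rewrite exp_0 in H. pose proof (phinn (INR k)). nra. }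
  assert (Wkp : forall k, 0 < Wk k) by (intros k; pose proof (Wk1 k); pose proof (phinn (INR k)); lra).
  assert (phim : forall x y, 0 <= x -> x <= y -> phi x <= phi y) by (apply K_mono, Kphi).
  set (Q2 := fun x b => 0 <= b /\ forall n : nat, - x <= INR n -> forall k : nat, forall s, lp s ->
     real (nrm s) <= INR k -> forall i, Defs.iter n T' s i <= b * Wk k).
  destruct (MAJ Q2) as [G [Gc [Gs [Gp [Gz GQ]]]]].
  - intros x b b' [h0 h] hb. split. lra. intros n hn k s hs hk i. specialize (h n hn k s hs hk i).
    specialize (Wkp k). nra.
  - intros x b [h _]; auto.
  - intros x. exists 1. intros y hy. split. lra. intros n hn k s hs hk i.
    destruct (Hphi s hs n i) as [_ h]. pose proof (phim _ _ (nrm_nonneg I i0 s hs) hk). specialize (Wk1 k). lra.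
  - intros eps he. destruct (nat_above (/ eps)) as [K HK].
    assert (hK : 0 < INR K) by (pose proof (Rinv_0_lt_compat eps he); lra).
    destruct (UGA (INR K) eps hK he) as [N HN].
    exists (- INR N). intros y hy. split. lra. intros n hn k s hs hk i.
    assert (hNn : (N <= n)%nat) by (apply INR_le; lra).
    destruct (le_lt_dec K k) as [hkK|hkK].
    + destruct (Hphi s hs n i) as [_ h]. pose proof (phim _ _ (nrm_nonneg I i0 s hs) hk).
      apply le_INR in hkK.
      assert (exp (INR k) * eps >= 1).
      { pose proof (exp_ineq1_le (INR k)).
        assert (INR k * eps > 1). { apply (Rmult_lt_compat_r eps) in HK; auto. rewrite Rinv_l in HK by lra. nra. }
        nra. }
      unfold Wk. pose proof (phinn (INR k)). nra.
    + apply lt_INR in hkK. specialize (HN s hs ltac:(lra) n hNn i). specialize (Wk1 k).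
      pose proof (phinn (INR k)). nra.
  - set (th := fun t => G (- t)).
    assert (thc : forall x, continuity_pt th x) by (intros x; unfold th; apply cpt_comp; [apply cpt_opp | apply Gc]).
    assert (ths : forall x y, x < y -> th y < th x) by (intros x y h; unfold th; apply Gs; lra).
    assert (thp : forall x, 0 < th x) by (intros; apply Gp).
    assert (thz : forall eps, 0 < eps -> exists T, forall t, T <= t -> th t <= eps).
    { intros eps he. destruct (Gz eps he) as [X HX]. exists (- X). intros t ht. apply HX. lra. }
    assert (phis' : forall x y, 0 <= x -> x < y -> phi x < phi y) by auto.
    exists (bet phi th). split. apply (bet_KL phi phic phinn phi0 phis' th thc ths thp thz).
    intros s n hs. apply nrm_le_of. intros i.
    pose proof (iter_nonneg T' T'_nonneg n s (lp_nonneg s hs) i) as hx.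
    rewrite Rabs_right by (unfold T' in hx; lra).
    pose proof (nrm_nonneg I i0 s hs) as hr. set (r := real (nrm s)) in *.
    destruct (nat_between r hr) as [k [hk1 hk2]].
    apply (bet_bound phi phinn th thp (Defs.iter n T' s i) r (INR n) (Wk k) hr hx).
    apply (Hphi s hs n i).
    destruct (GQ (- INR n)) as [_ HQ]. apply (HQ n ltac:(lra) k s hs hk1 i).
    unfold Wk, Wt. pose proof (phim _ _ (pos_INR k) (Rle_trans _ _ _ hk2 (Rle_refl _))).
    assert (phi (INR k) <= phi (r + 1)) by (apply phim; [apply pos_INR | lra]).
    pose proof (exp_le (INR k) (r + 1) hk2). pose proof (exp_pos (INR k)). pose proof (phinn (INR k)).
    apply Rmult_le_compat; lra.
Qed.

End Main.

Theorem corollary2p21 (I : Type) (Icount : exists f : I -> nat, forall a b, f a = f b -> a = b)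
  (Inonempty : inhabited I)
  (Ii : I -> list I) (gam : I -> I -> R -> R) (mu : I -> vec I -> Rbar)
  (Hgain : is_gain_data Ii gam mu) (HA : assumptionA Ii gam)
  (rho : R -> R) (Hrho : classKinf rho)
  (Hcof : cofinal (Psi (Gam_rho Ii gam mu rho)))
  (HNJI : uniform_NJI Ii (Gam_rho Ii gam mu rho))
  (HM : exists M, 0 < M /\ forall i, INR (length (Ii i)) <= M) :
  exists rho', classKinf rho' /\
    UGS (Gam_hat Ii gam mu rho') /\ UGAS (Gam_rho Ii gam mu rho').
Proof.
  destruct Inonempty as [i0]. destruct HM as [M [HMp HMb]].
  exact (main_sec I i0 Ii gam mu Hgain HA rho Hrho Hcof HNJI M HMp HMb).
Qed.
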